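(* Let $I=(f_1,\dots,f_s)$ be an ideal of $R$ generated by homogeneous polynomials and let $M$ be a graded generalized Eulerian $A_n(K)$-module. Then $H^i_I(M)$ is a generalized Eulerian $A_n(K)$-module for all $i\ge0$.
   Context: $K$ is a field of characteristic zero, $R=K[X_1,\dots,X_n]$ standard graded, $A_n(K)$ the Weyl algebra graded by $\deg X_i=1$, $\deg\partial_i=-1$; $\mathcal E_n=\sum_iX_i\partial_i$; $|z|$ is the degree of homogeneous $z$. A graded left $A_n(K)$-module $M$ is generalized Eulerian if for every homogeneous $z\in M$ there is $a\ge1$ with $(\mathcal E_n-|z|)^az=0$. $H^i_I(M)$ is the local cohomology, with its natural graded $A_n(K)$-module structure (e.g. via the Čech complex on $f_1,\dots,f_s$). *)

(* Defs.v *)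
From HB Require Import structures.
From mathcomp Require Import all_boot all_order all_algebra.
From mathcomp Require Import mpoly.
Set Implicit Arguments. Unset Strict Implicit. Unset Printing Implicit Defensive.
Import Order.TTheory GRing.Theory Num.Theory.
Local Open Scope ring_scope.

(* A left A_n(K)-module is a K-vector space V together with the actions
   x i (multiplication by X_i) and d i (action of the derivation d_i).
   A grading is a family G : int -> V -> Prop of subspaces, G e = M_e. *)

Section WeylModules.
Variables (K : fieldType) (V : lmodType K) (n : nat).
Variables (x d : 'I_n -> V -> V) (G : int -> V -> Prop).

Definition weyl_module : Prop :=
  [/\ (forall i a u v, x i (a *: u + v) = a *: x i u + x i v),
      (forall i a u v, d i (a *: u + v) = a *: d i u + d i v),
      (forall i j v, x i (x j v) = x j (x i v)),
      (forall i j v, d i (d j v) = d j (d i v)) &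
      (forall i j v, d i (x j v) - x j (d i v) = (i == j)%:R *: v)].

Definition graded_weyl_module : Prop :=
  [/\ weyl_module,
      (forall e, G e 0) /\
      (forall e a u v, G e u -> G e v -> G e (a *: u + v)),
      (forall v, exists (s : seq int) (vs : int -> V),
          (forall e, G e (vs e)) /\ v = \sum_(e <- s) vs e),
      (forall (s : seq int) (vs : int -> V), uniq s ->
          (forall e, e \in s -> G e (vs e)) ->
          \sum_(e <- s) vs e = 0 -> forall e, e \in s -> vs e = 0) &
      (forall i e v, G e v -> G (e + 1) (x i v)) /\
      (forall i e v, G e v -> G (e - 1) (d i v))].

Definition euler (v : V) : V := \sum_(i < n) x i (d i v).

Definition gen_eulerian : Prop :=
  forall (e : int) (z : V), G e z ->
    exists a : nat, (1 <= a)%N /\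
      iter a (fun w => euler w - e%:~R *: w) z = 0.

Definition monact (m : 'X_{1..n}) (v : V) : V :=
  foldr (fun i w => iter (m i) (x i) w) v (enum 'I_n).

Definition polyact (p : {mpoly K[n]}) (v : V) : V :=
  \sum_(m <- msupp p) p@_m *: monact m v.

(* ---- localization M_f, represented by fractions v / f^k ----
   d_i (v / f^k) = (f d_i v - k (d_i f) v) / f^(k+1),
   X_i (v / f^k) = (X_i v) / f^k.
   Hence (E_n - e)(v / f^k) = euler_step f k e v / f^(k+1). *)
Definition euler_step (f : {mpoly K[n]}) (k : nat) (e : int) (v : V) : V :=
  \sum_(i < n) x i (polyact f (d i v) - k%:R *: polyact (mderiv i f) v)
  - e%:~R *: polyact f v.

(* (E_n - e)^a (v / f^k) = euler_iter f e a k v / f^(k+a) *)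
Fixpoint euler_iter (f : {mpoly K[n]}) (e : int) (a k : nat) (v : V) : V :=
  if a is a'.+1 then euler_iter f e a' k.+1 (euler_step f k e v) else v.

(* ---- Cech complex on f_1, ..., f_s ----
   C^i = (+)_{|S| = i} M_{f_S}, f_S = prod_{j in S} f_j.  A cochain with
   common denominator exponent k is given by c : {set 'I_s} -> V, meaning
   the family (c S / f_S^k)_S (only the values on |S| = i matter).
   The restriction M_{f_(T\j)} -> M_{f_T} sends v/f_(T\j)^k to f_j^k v/f_T^k. *)
Variables (s : nat) (f : 'I_s -> {mpoly K[n]}) (dg : 'I_s -> nat).

Definition fS (S : {set 'I_s}) : {mpoly K[n]} := \prod_(j in S) f j.
Definition degS (S : {set 'I_s}) : nat := (\sum_(j in S) dg j)%N.

(* numerator of the Cech differential of (c_S / f_S^k)_S, at T;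
   the result is (cech_d k c T) / f_T^k *)
Definition cech_d (k : nat) (c : {set 'I_s} -> V) (T : {set 'I_s}) : V :=
  \sum_(j in T) (-1) ^+ #|[set t in T | (t < j)%N]| *:
      polyact (f j ^+ k) (c (T :\ j)).

Definition cech_cocycle (i k : nat) (c : {set 'I_s} -> V) : Prop :=
  forall T : {set 'I_s}, #|T| = i.+1 ->
    exists N : nat, polyact (fS T ^+ N) (cech_d k c T) = 0.

(* (k, c) is an i-coboundary: equal in C^i to the differential of some
   (i-1)-cochain (l, b)  (for i = 0 this forces c = 0 in C^0 = M) *)
Definition cech_coboundary (i k : nat) (c : {set 'I_s} -> V) : Prop :=
  exists (l : nat) (b : {set 'I_s} -> V),
    forall S : {set 'I_s}, #|S| = i ->
      exists N : nat,
        polyact (fS S ^+ (k + N)) (cech_d l b S)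
        = polyact (fS S ^+ (l + N)) (c S).

(* (k, c) is homogeneous of degree e: each c_S / f_S^k lies in (M_{f_S})_e,
   i.e. c_S in M_(e + k deg f_S) *)
Definition cech_homogeneous (i k : nat) (e : int) (c : {set 'I_s} -> V) : Prop :=
  forall S : {set 'I_s}, #|S| = i -> G (e + (k * degS S)%N%:Z) (c S).

(* H^i_I(M) is generalized Eulerian: every homogeneous class z = [c/f^k]
   of degree e satisfies (E_n - e)^a z = 0 in H^i for some a >= 1 *)
Definition local_cohomology_gen_eulerian (i : nat) : Prop :=
  forall (e : int) (k : nat) (c : {set 'I_s} -> V),
    cech_homogeneous i k e c -> cech_cocycle i k c ->
    exists a : nat, (1 <= a)%N /\
      cech_coboundary i (k + a) (fun S => euler_iter (fS S) e a k (c S)).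

End WeylModules.

(* Main.v *)
Require Import Defs.
From HB Require Import structures.
From mathcomp Require Import all_boot all_order all_algebra.
From mathcomp Require Import mpoly.
Set Implicit Arguments. Unset Strict Implicit. Unset Printing Implicit Defensive.
Import GRing.Theory.
Local Open Scope ring_scope.

Section Aux.
Variables (K : fieldType) (n : nat) (V : lmodType K).

Definition Lin (g : V -> V) := forall a u v, g (a *: u + v) = a *: g u + g v.

Lemma lin0 g : Lin g -> g 0 = 0.
Proof.
by move=> h; have := h (-1) 0 0; rewrite scaler0 addr0 scaleN1r addNr.
Qed.
Lemma linD g : Lin g -> forall u v, g (u + v) = g u + g v.
Proof. by move=> h u v; have := h 1 u v; rewrite !scale1r. Qed.
Lemma linZ g : Lin g -> forall a u, g (a *: u) = a *: g u.
Proof. by move=> h a u; have := h a u 0; rewrite !addr0 (lin0 h) addr0. Qed.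
Lemma linN g : Lin g -> forall u, g (- u) = - g u.
Proof. by move=> h u; rewrite -scaleN1r linZ // scaleN1r. Qed.
Lemma linB g : Lin g -> forall u v, g (u - v) = g u - g v.
Proof. by move=> h u v; rewrite linD // linN. Qed.
Lemma lin_sum g : Lin g -> forall (I : Type) (r : seq I) (P : pred I) (F : I -> V),
  g (\sum_(i <- r | P i) F i) = \sum_(i <- r | P i) g (F i).
Proof. by move=> h I r P F; apply: (big_morph g (linD h) (lin0 h)). Qed.
Lemma lin_iter g k : Lin g -> Lin (iter k g).
Proof. by move=> h; elim: k => [|k IH] a u v //=; rewrite IH h. Qed.
Lemma lin_comp g1 g2 : Lin g1 -> Lin g2 -> Lin (fun v => g1 (g2 v)).
Proof. by move=> h1 h2 a u v; rewrite h2 h1. Qed.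
Lemma lin_id : Lin id. Proof. by []. Qed.

Definition comm (g h : V -> V) := forall v, g (h v) = h (g v).
Lemma comm_iter g h k : comm g h -> comm g (iter k h).
Proof. by move=> c; elim: k => [|k IH] v //=; rewrite c IH. Qed.
Lemma comm_sym g h : comm g h -> comm h g.
Proof. by move=> c v; rewrite c. Qed.

Lemma comm_iter2 g h a b : comm g h -> comm (iter a g) (iter b h).
Proof. by move=> c; apply/comm_iter/comm_sym/comm_iter/comm_sym. Qed.

End Aux.
Section Weyl.
Variables (K : fieldType) (n : nat) (V : lmodType K) (x d : 'I_n -> V -> V).
Hypothesis hx : forall i, Lin (x i).
Hypothesis hd : forall i, Lin (d i).
Hypothesis hxx : forall i j, comm (x i) (x j).
Hypothesis hdx : forall i j v, d i (x j v) - x j (d i v) = (i == j)%:R *: v.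

Lemma dx_ne i j : i != j -> comm (d i) (x j).
Proof. by move=> ne v; apply/eqP; rewrite -subr_eq0 hdx (negPf ne) scale0r. Qed.
Lemma dx_eq j v : d j (x j v) = x j (d j v) + v.
Proof. by rewrite -[d j _](subrK (x j (d j v))) hdx eqxx scale1r addrC. Qed.

Definition Fl (mm : 'I_n -> nat) (l : seq 'I_n) (v : V) :=
  foldr (fun i w => iter (mm i) (x i) w) v l.

Lemma lin_Fl mm l : Lin (Fl mm l).
Proof.
elim: l => [|i l IH] a u v //=.
by rewrite IH; apply: lin_iter.
Qed.

Lemma Fl_eq mm mm' l v : {in l, mm =1 mm'} -> Fl mm l v = Fl mm' l v.
Proof.
elim: l => [|i l IH] //= h.
rewrite h ?mem_head // IH // => k kl; by apply: h; rewrite inE kl orbT.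
Qed.

Lemma x_Fl j mm l : comm (x j) (Fl mm l).
Proof.
elim: l => [|i l IH] v //=.
by rewrite (comm_iter _ (hxx j i)) IH.
Qed.

Definition upd (mm : 'I_n -> nat) j := fun i => if i == j then 0%N else mm i.

Lemma Fl_fact mm l j v : uniq l -> j \in l ->
  Fl mm l v = iter (mm j) (x j) (Fl (upd mm j) l v).
Proof.
elim: l => [|i l IH] //= /andP[il ul].
rewrite inE; case: (eqVneq j i) => [E _|ne /= jl].
  subst j; rewrite /upd eqxx /=; congr iter; apply: Fl_eq => k kl.
  by rewrite /upd; case: eqP => // E; move: il; rewrite -E kl.
rewrite IH // /upd eq_sym (negPf ne).
by rewrite (comm_iter2 _ _ (hxx i j)).
Qed.

Lemma d_Fl0 j mm l : mm j = 0%N -> comm (d j) (Fl mm l).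
Proof.
move=> h; elim: l => [|i l IH] v //=.
case: (eqVneq j i) => [<-|ne]; first by rewrite h /= IH.
by rewrite (comm_iter _ (dx_ne ne)) IH.
Qed.

Lemma d_iter j k w :
  d j (iter k (x j) w) = iter k (x j) (d j w) + k%:R *: iter k.-1 (x j) w.
Proof.
elim: k => [|k IH] /=; first by rewrite scale0r addr0.
rewrite dx_eq IH linD // linZ //.
case: k {IH} => [|k] /=; first by rewrite !scale0r scale1r addr0.
by rewrite -addrA [in RHS]mulrSr scalerDl scale1r.
Qed.

Definition mon (m : 'X_{1..n}) : 'I_n -> nat := fun i => m i.

Lemma monactE m v : monact x m v = Fl (mon m) (enum 'I_n) v.
Proof. by []. Qed.

Lemma lin_monact m : Lin (monact x m).
Proof. exact: lin_Fl. Qed.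

Lemma x_monact j m : comm (x j) (monact x m).
Proof. exact: x_Fl. Qed.

Lemma d_monact j m w :
  d j (monact x m w) = monact x m (d j w) + (m j)%:R *: monact x (m - U_(j))%MM w.
Proof.
have F mm (v : V) := @Fl_fact mm (enum 'I_n) j v (enum_uniq _) (mem_enum _ j).
rewrite !monactE (F (mon m) w) (F (mon m) (d j w)) (F (mon (m - U_(j))%MM) w).
rewrite d_iter (d_Fl0 _ _ _ (mm := upd (mon m) j)); last by rewrite /upd eqxx.
congr (_ + _ *: _); rewrite /mon mnmBE mnm1E eqxx subn1; congr iter.
apply: Fl_eq => k _; rewrite /upd; case: eqP => // /eqP ne.
by rewrite mnmBE mnm1E eq_sym (negPf ne) subn0.
Qed.

Lemma x_monact_sub j (m : 'X_{1..n}) (w : V) : (0 < m j)%N ->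
  x j (monact x (m - U_(j))%MM w) = monact x m w.
Proof.
move=> h.
have F mm (v : V) := @Fl_fact mm (enum 'I_n) j v (enum_uniq _) (mem_enum _ j).
rewrite !monactE (F (mon m) w) (F (mon (m - U_(j))%MM) w).
rewrite {1}/mon mnmBE mnm1E eqxx subn1.
rewrite (Fl_eq (mm' := upd (mon m) j)); last first.
  move=> k _; rewrite /upd /mon mnmBE mnm1E; case: eqP => // /eqP.
  by rewrite eq_sym => /negPf ->; rewrite subn0.
by rewrite /mon -iterS prednK.
Qed.


Lemma polyact_sup (p : {mpoly K[n]}) (r : seq 'X_{1..n}) (v : V) :
  uniq r -> {subset msupp p <= r} ->
  polyact x p v = \sum_(m <- r) p@_m *: monact x m v.
Proof.
move=> ur sub.
rewrite [RHS](bigID (fun m => m \in msupp p)) /= [X in _ + X]big1 ?addr0; last first.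
  by move=> m; rewrite mcoeff_msupp negbK => /eqP ->; rewrite scale0r.
rewrite -big_filter /polyact; apply: perm_big; apply: uniq_perm.
- exact: msupp_uniq.
- exact: filter_uniq.
move=> m; rewrite mem_filter /=; apply/idP/andP => [h|[]//]; split=> //.
exact: sub.
Qed.

Lemma polyactD p q v : polyact x (p + q) v = polyact x p v + polyact x q v.
Proof.
set r := undup (msupp (p + q) ++ msupp p ++ msupp q).
have ur : uniq r by exact: undup_uniq.
rewrite (@polyact_sup (p + q) r) ?(@polyact_sup p r) ?(@polyact_sup q r) //;
  try by move=> m hm; rewrite mem_undup !mem_cat hm ?orbT.
rewrite -big_split; apply: eq_bigr => m _; by rewrite mcoeffD scalerDl.
Qed.

Lemma polyactZ c p v : polyact x (c *: p) v = c *: polyact x p v.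
Proof.
set r := undup (msupp (c *: p) ++ msupp p).
have ur : uniq r by exact: undup_uniq.
rewrite (@polyact_sup (c *: p) r) ?(@polyact_sup p r) //;
  try by move=> m hm; rewrite mem_undup !mem_cat hm ?orbT.
rewrite scaler_sumr; apply: eq_bigr => m _; by rewrite mcoeffZ scalerA.
Qed.

Lemma polyact0 v : polyact x 0 v = 0.
Proof. by rewrite /polyact msupp0 big_nil. Qed.

Lemma polyactX m v : polyact x 'X_[m] v = monact x m v.
Proof. by rewrite /polyact msuppX big_seq1 mcoeffX eqxx scale1r. Qed.

Lemma polyact_sum (I : Type) (r : seq I) (P : pred I) (F : I -> {mpoly K[n]}) v :
  polyact x (\sum_(i <- r | P i) F i) v = \sum_(i <- r | P i) polyact x (F i) v.
Proof.
by apply: (big_morph (fun p => polyact x p v) (fun p q => polyactD p q v) (polyact0 v)).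
Qed.

Lemma lin_polyact p : Lin (polyact x p).
Proof.
move=> a u v; rewrite /polyact scaler_sumr -big_split; apply: eq_bigr => m _.
by rewrite lin_monact scalerDr !scalerA mulrC.
Qed.

Lemma polyact_deriv j p w :
  polyact x (mderiv j p) w =
  \sum_(m <- msupp p) p@_m *: ((m j)%:R *: monact x (m - U_(j))%MM w).
Proof.
rewrite {1}(mpolyE p) (big_morph (mderiv j) (mderivD j) (mderiv0 _ j)) polyact_sum.
by apply: eq_bigr => m _; rewrite mderivZ mderivX !polyactZ polyactX.
Qed.

Lemma d_poly j p w :
  d j (polyact x p w) = polyact x p (d j w) + polyact x (mderiv j p) w.
Proof.
rewrite polyact_deriv /polyact lin_sum // -big_split; apply: eq_bigr => m _.
by rewrite (linZ (hd j)) d_monact scalerDr.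
Qed.

Lemma x_poly j p : comm (x j) (polyact x p).
Proof.
move=> w; rewrite /polyact lin_sum //; apply: eq_bigr => m _.
by rewrite (linZ (hx j)) x_monact.
Qed.

Lemma euler_poly (f : {mpoly K[n]}) (dl : nat) v : f \is dl.-homog ->
  \sum_(i < n) x i (polyact x (mderiv i f) v) = dl%:R *: polyact x f v.
Proof.
move=> hf.
rewrite (eq_bigr (fun i => \sum_(m <- msupp f) (m i)%:R *: (f@_m *: monact x m v))); last first.
  move=> i _; rewrite polyact_deriv lin_sum //; apply: eq_bigr => m _.
  rewrite !(linZ (hx i)); case: (posnP (m i)) => [->|pos]; first by rewrite !scale0r scaler0.
  by rewrite x_monact_sub // !scalerA mulrC.
rewrite exchange_big /polyact scaler_sumr /=; apply: eq_big_seq => m hm.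
by rewrite -scaler_suml -natr_sum -mdegE (dhomog_mf hf hm).
Qed.

Lemma lin_euler : Lin (euler x d).
Proof.
move=> a u v; rewrite /euler scaler_sumr -big_split; apply: eq_bigr => i _.
by rewrite hd hx.
Qed.

Definition T (c : int) (w : V) := euler x d w - c%:~R *: w.

Lemma lin_T c : Lin (T c).
Proof.
move=> a u v; rewrite /T lin_euler scalerDr scalerA mulrC -scalerA.
by rewrite opprD addrACA scalerBr.
Qed.

Section Homog.
Variables (f : {mpoly K[n]}) (dl : nat).
Hypothesis hf : f \is dl.-homog.

Lemma step_eq k e v :
  euler_step x d f k e v = polyact x f (T (e + (k * dl)%N%:Z) v).
Proof.
rewrite /euler_step /T (linB (lin_polyact f)) (linZ (lin_polyact f)).
rewrite (eq_bigr (fun i => x i (polyact x f (d i v)) - k%:R *: x i (polyact x (mderiv i f) v)));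
  last by move=> i _; rewrite (linB (hx i)) (linZ (hx i)).
rewrite sumrB -scaler_sumr (@euler_poly f dl _ hf).
rewrite /euler (lin_sum (lin_polyact f)).
rewrite intrD scalerDl scalerA -natrM opprD addrA [RHS]addrAC.
congr (_ - _ - _); first by apply: eq_bigr => i _; rewrite x_poly.
Qed.

Lemma E_F w : euler x d (polyact x f w) = polyact x f (euler x d w) + dl%:R *: polyact x f w.
Proof.
rewrite /euler (eq_bigr (fun i => polyact x f (x i (d i w)) + x i (polyact x (mderiv i f) w)));
  last by move=> i _; rewrite d_poly (linD (hx i)) x_poly.
by rewrite big_split /= (@euler_poly f dl _ hf) (lin_sum (lin_polyact f)).
Qed.

Lemma T_F c u : T (c + dl%:Z) (polyact x f u) = polyact x f (T c u).
Proof.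
rewrite /T E_F (linB (lin_polyact f)) (linZ (lin_polyact f)).
rewrite intrD scalerDl opprD addrA.
by rewrite [_ + _ - _]addrAC -pmulrn addrK.
Qed.

Lemma iter_T_F a c u :
  iter a (T (c + dl%:Z)) (polyact x f u) = polyact x f (iter a (T c) u).
Proof. by elim: a => //= a IH; rewrite IH T_F. Qed.

Lemma euler_iter_eq e a k v :
  euler_iter x d f e a k v =
  iter a (polyact x f) (iter a (T (e + (k * dl)%N%:Z)) v).
Proof.
elim: a k v => [|a IH] k v; first by [].
rewrite [LHS]/= IH step_eq.
have E : e + (k.+1 * dl)%N%:Z = (e + (k * dl)%N%:Z) + dl%:Z.
  by rewrite mulSn PoszD addrCA addrC.
by rewrite E iter_T_F -!iterSr.
Qed.

End Homog.

End Weyl.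

Theorem mainTheorem5 (K : fieldType) (hK : [pchar K] =i pred0)
    (n : nat) (V : lmodType K) (x d : 'I_n -> V -> V) (G : int -> V -> Prop)
    (hM : graded_weyl_module x d G) (hE : gen_eulerian x d G)
    (s : nat) (f : 'I_s -> {mpoly K[n]}) (dg : 'I_s -> nat)
    (hf : forall j, f j \is (dg j).-homog) :
  forall i : nat, local_cohomology_gen_eulerian x d G f dg i.
Proof.
case: hM => [[hxl hdl hxx _ hdx] _ _ _ _].
have hx : forall i, Lin (x i) by move=> i; exact: hxl.
have hd : forall i, Lin (d i) by move=> i; exact: hdl.
have hxx' : forall i j, comm (x i) (x j) by move=> i j v; exact: hxx.
move=> i e k c hom _.
pose TS (S : {set 'I_s}) := T x d (e + (k * degS dg S)%N%:Z).
have hfS : forall S, fS f S \is (degS dg S).-homog.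
  move=> S; rewrite /fS /degS.
  apply: (big_ind2 (fun p dl => p \is dl.-homog)) => //.
  - exact: dhomog1.
  - by move=> p1 d1 p2 d2 h1 h2; apply: dhomogM.
have mono : forall S a b, (a <= b)%N -> iter a (TS S) (c S) = 0 ->
    iter b (TS S) (c S) = 0.
  move=> S a b ab h; rewrite -(subnK ab) iterD h.
  exact: (lin0 (lin_iter _ (lin_T hx hd _))).
have unif : forall l : seq {set 'I_s}, exists a,
    forall S, S \in l -> #|S| = i -> iter a (TS S) (c S) = 0.
  elim=> [|S l [a IH]]; first by exists 0%N.
  have [b hb] : exists b, #|S| = i -> iter b (TS S) (c S) = 0.
    case: (boolP (#|S| == i)) => [/eqP hS|hS]; last by exists 0%N => /eqP; rewrite (negPf hS).
    have [b [_ hb]] := hE _ _ (hom S hS); by exists b.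
  exists (maxn a b) => S'; rewrite inE => /orP[/eqP ->|hS'] hc.
    by apply: (mono _ b); [exact: leq_maxr | exact: hb].
  by apply: (mono _ a); [exact: leq_maxl | exact: IH].
have [a ha] := unif (enum {set 'I_s}).
exists a.+1; split => //.
exists 0%N, (fun _ => 0) => S hS; exists 0%N.
rewrite /cech_d big1; last by move=> j _; rewrite (lin0 (lin_polyact hx _)) scaler0.
rewrite (lin0 (lin_polyact hx _)) (euler_iter_eq hx hd hxx' hdx (hfS S)).
rewrite (mono S a) ?leqnSn ?ha ?mem_enum //.
by rewrite (lin0 (lin_iter _ (lin_polyact hx _))) (lin0 (lin_polyact hx _)).
Qed.
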